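(* For every $\beta>0$, every $\lambda\in(0,n)$ with $n\ge\lambda\ge\frac{16}{9}\log\frac2\beta$, every $r\in\mathbb{N}$ and every $X=(x_1,\dots,x_n)\in[0,1]^n$, \[ \Pr\left[\left|P^{\mathbb{R}}_{n,\lambda,r}(X)-\sum_{i=1}^n x_i\right|\ge\frac{\sqrt2}{r}\sqrt{n\log\frac2\beta}+\frac{n}{n-\lambda}\sqrt{2\frac{\lambda}{r}\log\frac2\beta}\right]<2\beta. \]
   Context: Bit randomizer $R^{0/1}_{n,\lambda}(b)$, $b\in\{0,1\}$, $\lambda\in(0,n)$: draw $\mathbf{b}\sim\mathrm{Ber}(\lambda/n)$; output $b$ if $\mathbf{b}=0$, a fresh $\mathrm{Ber}(1/2)$ bit if $\mathbf{b}=1$. Encoder $E_r(x)$, $x\in[0,1]$: $\mu=\lceil xr\rceil$, $p=xr-\mu+1$, and for $j=1,\dots,r$: $b_j=1$ if $j<\mu$, $b_j\sim\mathrm{Ber}(p)$ if $j=\mu$, $b_j=0$ if $j>\mu$. Real-sum protocol $P^{\mathbb{R}}_{n,\lambda,r}$: user $i$ computes $(b_{i,1},\dots,b_{i,r})=E_r(x_i)$ and sends the $r$ messages $y_{i,j}=R^{0/1}_{n,\lambda}(b_{i,j})$ (all randomness independent); the $nr$ messages are shuffled uniformly at random; the analyzer outputs $\frac1r\cdot\frac{n}{n-\lambda}\left(\sum_j\sum_i y_{i,j}-\frac{\lambda r}{2}\right)$. $\log$ is the natural logarithm. *)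

(* Defs.v *)
From HB Require Import structures.
From mathcomp Require Import all_boot all_order all_algebra all_fingroup.
From mathcomp Require Import all_classical all_reals all_analysis.
Set Implicit Arguments. Unset Strict Implicit. Unset Printing Implicit Defensive.
Import Order.TTheory GRing.Theory Num.Theory.
Local Open Scope ring_scope.

Section Protocol.
Variables (R : realType) (n r : nat) (lam : R) (x : 'I_n -> R).

Definition idx : finType := (ordinal n * ordinal r)%type.

Definition ber (q : R) (b : bool) : R := if b then q else 1 - q.

Definition enc_mu (xi : R) : int := Num.ceil (xi * r%:R).
Definition enc_p (xi : R) : R := xi * r%:R - (enc_mu xi)%:~R + 1.

(* randomness of one (user i, message j): (encoder coin e, randomizer
   selector bb ~ Ber(lam/n), fresh bit c ~ Ber(1/2)) *)
Definition coins := {ffun idx -> bool * bool * bool}.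
Definition outcome := (coins * {perm idx})%type.

(* encoder bit b_{i,j}; j : 'I_r is the (j+1)-th bit, 1-indexed *)
Definition enc_bit (xi : R) (j : 'I_r) (e : bool) : bool :=
  let mu := enc_mu xi in
  if (j.+1%:Z < mu)%R then true
  else if (j.+1%:Z == mu) then e
  else false.

Definition message (w : coins) (ij : idx) : bool :=
  let: (e, bb, c) := w ij in
  if bb then c else enc_bit (x ij.1) ij.2 e.

Definition coin_weight (ij : idx) (t : bool * bool * bool) : R :=
  let: (e, bb, c) := t in
  (if (ij.2.+1%:Z == enc_mu (x ij.1)) then ber (enc_p (x ij.1)) e
   else ber (1/2) e) (* coin unused when j <> mu *)
  * ber (lam / n%:R) bb * ber (1/2) c.

Definition weight (o : outcome) : R :=
  (\prod_(ij : idx) coin_weight ij (o.1 ij)) / ((n * r)`!)%:R.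

(* shuffled multiset of messages, as the sequence the analyzer receives *)
Definition shuffled (o : outcome) : seq bool :=
  [seq message o.1 (o.2 k) | k <- enum idx].

Definition analyzer (ys : seq bool) : R :=
  (r%:R)^-1 * (n%:R / (n%:R - lam)) *
  ((\sum_(y <- ys) (y : nat)%:R) - lam * r%:R / 2).

Definition PR_output (o : outcome) : R := analyzer (shuffled o).

Definition prob (E : R -> bool) : R :=
  \sum_(o : outcome | E (PR_output o)) weight o.

End Protocol.

(* Main.v *)
Require Import Defs.
From HB Require Import structures.
From mathcomp Require Import all_boot all_order all_algebra all_fingroup.
From mathcomp Require Import all_classical all_reals all_analysis.
From mathcomp Require Import ring lra zify.
Import Order.TTheory GRing.Theory Num.Theory.
Local Open Scope ring_scope.

Section Ana.
Context {R : realType}.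
Implicit Types x : R.

Lemma series_exp_bound x (k : nat) : 0 <= x < 3 ->
  series (exp_coeff x) k.+2 + x ^+ k.+2 / (k.+2)`!%:R / (1 - x / 3)
  <= 1 + x + x ^+ 2 / 2 / (1 - x / 3).
Proof.
move=> /andP[x0 x3].
have y0 : 0 < 1 - x / 3 by lra.
elim: k => [|k IH].
  rewrite /series /= big_nat_recr //= big_nat_recr //= big_geq // /exp_coeff /=.
  rewrite expr0 expr1 !factS /= fact0 /=. lra.
apply: le_trans IH.
rewrite /series /= [X in X + _ <= _]big_nat_recr //= -addrA lerD2l /exp_coeff /=.
set T := x ^+ k.+2 / (k.+2)`!%:R.
have -> : x ^+ k.+3 / (k.+3)`!%:R = T * (x / (k.+3)%:R).
  by rewrite /T factS natrM exprS invfM; ring.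
have T0 : 0 <= T by rewrite /T divr_ge0 // exprn_ge0.
clearbody T.
have h : x / (k.+3)%:R <= x / 3.
  rewrite ler_pdivrMr // mulrAC ler_pdivlMr //; apply: ler_wpM2l => //.
  by rewrite (natrD _ 3 k) lerDl.
have -> : T + T * (x / (k.+3)%:R) / (1 - x / 3) = T * (1 - x/3 + x / (k.+3)%:R) / (1 - x / 3).
  field; apply/andP; split; apply/eqP => H; [lra|].
  by have := ler0n R k; lra.
rewrite ler_pM2r ?invr_gt0 //.
rewrite -subr_ge0.
have -> : T - T * (1 - x / 3 + x / k.+3%:R) = T * (x / 3 - x / k.+3%:R) by ring.
by rewrite mulr_ge0 // subr_ge0.
Qed.

Lemma expR_le_quad x : 0 <= x < 3 -> expR x <= 1 + x + x ^+ 2 / 2 / (1 - x / 3).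
Proof.
move=> hx; rewrite /expR; apply: limr_le; first exact: is_cvg_series_exp_coeff.
near=> k.
have [m ->] : exists m, k = m.+2.
  by exists k.-2; rewrite -subn2 -addn2 subnK //; near: k; exists 2%N.
have H := series_exp_bound x m hx.
have t0 : 0 <= x ^+ m.+2 / (m.+2)`!%:R / (1 - x / 3).
  case/andP: hx => x0 x3.
  by rewrite divr_ge0 ?divr_ge0 ?exprn_ge0 //; lra.
lra.
Unshelve. all: by end_near. Qed.


Definition phi x := expR x - 1 - x.
Definition Mphi x := Num.max (phi x) (phi (- x)).

Lemma phi_ge0 x : 0 <= phi x.
Proof. by have := expR_ge1Dx x; rewrite /phi; lra. Qed.

Lemma phi_lt_pos x : 0 < x <= 11/10 -> phi x < x ^+ 2.
Proof.
move=> /andP[x0 x1].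
have h := @expR_le_quad x.
have hx : 0 <= x < 3 by apply/andP; split; lra.
have {}h := h hx.
have y0 : 0 < 1 - x / 3 by lra.
suff : x ^+ 2 / 2 / (1 - x / 3) < x ^+ 2 by rewrite /phi; lra.
rewrite ltr_pdivrMr // ltr_pdivrMr //.
have : 0 < x ^+ 2 by rewrite exprn_gt0.
nra.
Qed.

Lemma phiN_lt_pos x : 0 < x -> phi (- x) < x ^+ 2.
Proof.
move=> x0.
have h : expR (- x) <= (1 + x)^-1.
  rewrite expRN lef_pV2 ?posrE ?expR_gt0 //; last by lra.
  exact: expR_ge1Dx.
rewrite /phi opprK.
suff : (1 + x)^-1 - 1 + x < x ^+ 2 by lra.
have -> : (1 + x)^-1 - 1 + x = x ^+ 2 / (1 + x).
  by field; apply/eqP => H; lra.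
rewrite ltr_pdivrMr; last lra.
have : 0 < x ^+ 2 by rewrite exprn_gt0.
nra.
Qed.

Lemma MphiN x : Mphi (- x) = Mphi x.
Proof. by rewrite /Mphi opprK maxC. Qed.

Lemma Mphi_ge0 x : 0 <= Mphi x.
Proof. by rewrite /Mphi le_max phi_ge0. Qed.

Lemma Mphi_lt x : x != 0 -> `|x| <= 11/10 -> Mphi x < x ^+ 2.
Proof.
wlog x0 : x / 0 < x.
  move=> W xn0 xb; have [xp|xn] := ltP 0 x; first exact: W.
  rewrite -MphiN -sqrrN; apply: W; rewrite ?oppr_eq0 ?normrN //.
  by rewrite lt_def oppr_eq0 xn0 /= oppr_ge0.
move=> _; rewrite gtr0_norm // => xb.
rewrite /Mphi gt_max phiN_lt_pos // andbT phi_lt_pos //.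
by rewrite x0 xb.
Qed.

Lemma Mphi_le x : `|x| <= 11/10 -> Mphi x <= x ^+ 2.
Proof.
have [->|xn0] := eqVneq x 0.
  by rewrite /Mphi ge_max oppr0 /phi expR0 expr0n /= subrr subr0 lexx.
by move=> xb; apply/ltW/Mphi_lt.
Qed.

Lemma mgf_bern (p z : R) : 0 <= p <= 1 ->
  p * expR (z * (1 - p)) + (1 - p) * expR (- (z * p)) <= expR (p * phi z).
Proof.
move=> /andP[p0 p1].
have -> : p * expR (z * (1 - p)) + (1 - p) * expR (- (z * p))
    = expR (- (z * p)) * (1 + p * (expR z - 1)).
  have -> : z * (1 - p) = z + - (z * p) by ring.
  rewrite expRD; ring.
have -> : p * phi z = - (z * p) + p * (expR z - 1) by rewrite /phi; ring.
rewrite expRD ler_pM2l ?expR_gt0 //.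
exact: expR_ge1Dx.
Qed.

Lemma mgf_bern_sym (p z : R) : 0 <= p <= 1 ->
  p * expR (z * (1 - p)) + (1 - p) * expR (- (z * p)) <= expR ((1 - p) * phi (- z)).
Proof.
move=> /andP[p0 p1].
have h := @mgf_bern (1 - p) (- z).
have hp : 0 <= 1 - p <= 1 by apply/andP; split; lra.
have {}h := h hp.
apply: le_trans h; rewrite le_eqVlt; apply/orP; left; apply/eqP.
have -> : - z * (1 - (1 - p)) = - (z * p) by ring.
have -> : - (- z * (1 - p)) = z * (1 - p) by ring.
ring.
Qed.

End Ana.

Lemma chernoff (R : realType) (I T : finType) (cw g : I -> T -> R) (s t : R) :
  (forall i u, 0 <= cw i u) -> 0 <= s ->
  \sum_(w : {ffun I -> T}) (if t <= \sum_i g i (w i) then \prod_i cw i (w i) else 0)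
  <= expR (- (s * t)) * \prod_i \sum_(u : T) cw i u * expR (s * g i u).
Proof.
move=> cw0 s0.
rewrite bigA_distr_bigA mulr_sumr; apply: ler_sum => w _.
have P0 : 0 <= \prod_i cw i (w i) by apply: prodr_ge0 => i _.
rewrite big_split /= -expR_sum mulrCA -expRD.
case: ifP => ht.
  rewrite -[X in X <= _]mulr1 ler_wpM2l //.
  rewrite -expR0 ler_expR -mulr_sumr -mulrN -mulrDr mulr_ge0 //.
  by rewrite addrC subr_ge0.
by rewrite mulr_ge0 // expR_ge0.
Qed.

Section Marg.
Variables (R : realType) (n r : nat) (lam : R) (x : 'I_n -> R).

Definition outc (w : coins n r) : R :=
  (r%:R)^-1 * (n%:R / (n%:R - lam)) *
  ((\sum_(k : idx n r) (message x w k : nat)%:R) - lam * r%:R / 2).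

Lemma PR_output_eq (w : coins n r) (s : {perm idx n r}) :
  PR_output lam x (w, s) = outc w.
Proof.
rewrite /PR_output /analyzer /outc /shuffled /=; congr (_ * (_ - _)).
rewrite big_map big_enum /=.
rewrite [RHS](reindex_inj (@perm_inj _ s)) /=.
by apply: eq_bigl => i; rewrite inE.
Qed.

Lemma card_perm_idx : #|{perm idx n r}| = (n * r)`!.
Proof.
rewrite (eq_card (B := perm_on [set: idx n r])).
  by rewrite card_perm cardsE card_prod !card_ord.
move=> p; rewrite inE unfold_in /perm_on /=.
by apply/esym/fintype.subsetP => i _; rewrite finset.in_setT.
Qed.

Lemma prob_marg (E : R -> bool) : prob r lam x E =
  \sum_(w : coins n r) (if E (outc w) then \prod_ij coin_weight lam x ij (w ij) else 0).
Proof.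
rewrite /prob big_mkcond /=.
rewrite -(pair_big xpredT xpredT (fun w s => if E (PR_output lam x (w, s)) then weight lam x (w, s) else 0)) /=.
apply: eq_bigr => w _.
under eq_bigr => s _ do rewrite PR_output_eq.
rewrite /weight /= sumr_const card_perm_idx.
case: (E _); last by rewrite mul0rn.
rewrite -[LHS]mulr_natr mulfVK //.

Qed.

End Marg.

Lemma sum_step (R : realType) (k r : nat) (pv : R) :
  \sum_(j < r) (if (j.+1 < k)%N then 1 else if (j.+1 == k)%N then pv else 0)
  = if k == 0%N then 0 else if (k <= r)%N then (k.-1)%:R + pv else r%:R.
Proof.
elim: r => [|r IH].
  by rewrite big_ord0; case: k => //.
rewrite big_ord_recr /= IH.
case: k IH => [|k] IH //=.
  by rewrite add0r.
case: (ltngtP k r) => hkr.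
- have -> : (r.+1 < k.+1)%N = false by lia.
  have -> : (r.+1 == k.+1) = false by apply/eqP; lia.
  have -> : (k < r.+1)%N = true by lia.
  by rewrite addr0.
- have -> : (r.+1 < k.+1)%N = true by lia.
  have -> : (k < r.+1)%N = false by lia.
  by rewrite -natr1.
- subst k.
  by rewrite ltnn eqxx leqnn.
Qed.


Definition Wf {R : realType} (l : R) (b bb c : bool) : R :=
  ((if bb then c else b) : nat)%:R - (1 - l) * (b : nat)%:R - l / 2.
Definition Hs {R : realType} (l z : R) (b : bool) :=
  \sum_bb \sum_c ber l bb * ber (1/2) c * expR (z * Wf l b bb c).

Lemma Hs_bound (R : realType) (l z : R) (b : bool) : 0 <= l <= 1 ->
  Hs l z b <= expR (l / 2 * Mphi z).
Proof.
move=> /andP[l0 l1].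
have hq : 0 <= l / 2 <= 1 by apply/andP; split; lra.
case: b; rewrite /Hs !big_bool /Wf /ber /=.
- have -> : z * (1 - (1 - l) * 1 - l / 2) = - (- z * (l / 2)) by field.
  have -> : z * (0 - (1 - l) * 1 - l / 2) = - z * (1 - l / 2) by field.
  rewrite [X in X <= _](_ : _ = l / 2 * expR (- z * (1 - l / 2)) +
     (1 - l / 2) * expR (- (- z * (l / 2)))); last by field.
  have h2 : expR (l / 2 * phi (- z)) <= expR (l / 2 * Mphi z).
    by rewrite ler_expR ler_wpM2l ?(andP hq).1 // /Mphi le_max lexx orbT.
  exact: (le_trans (mgf_bern (l / 2) (- z) hq) h2).
- have -> : z * (1 - (1 - l) * 0 - l / 2) = z * (1 - l / 2) by field.
  have -> : z * (0 - (1 - l) * 0 - l / 2) = - (z * (l / 2)) by field.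
  rewrite [X in X <= _](_ : _ = l / 2 * expR (z * (1 - l / 2)) +
     (1 - l / 2) * expR (- (z * (l / 2)))); last by field.
  have h2 : expR (l / 2 * phi z) <= expR (l / 2 * Mphi z).
    by rewrite ler_expR ler_wpM2l ?(andP hq).1 // /Mphi le_max lexx.
  exact: (le_trans (mgf_bern (l / 2) z hq) h2).
Qed.

Lemma Gs_bound (R : realType) (p z : R) : 0 <= p <= 1 ->
  ber p true * expR (z * (1 - p)) + ber p false * expR (z * (0 - p))
  <= expR (Mphi z / 2).
Proof.
move=> hp; have /andP[p0 p1] := hp; rewrite /ber /=.
rewrite (_ : z * (0 - p) = - (z * p)); last by ring.
have M0 := Mphi_ge0 z.
have [ph|ph] := lerP p (1/2).
  apply: (le_trans (mgf_bern p z hp)); rewrite ler_expR.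
  have : phi z <= Mphi z by rewrite /Mphi le_max lexx.
  have := phi_ge0 z; nra.
apply: (le_trans (mgf_bern_sym p z hp)); rewrite ler_expR.
have : phi (- z) <= Mphi z by rewrite /Mphi le_max lexx orbT.
have := phi_ge0 (- z); nra.
Qed.

Section Model.
Variables (R : realType) (n r : nat) (lam : R) (x : 'I_n -> R).

Definition mu (i : 'I_n) : int := enc_mu r (x i).
Definition pp (i : 'I_n) : R := enc_p r (x i).
Definition bitf (ij : idx n r) (e : bool) : bool := enc_bit (x ij.1) ij.2 e.
Definition mval (ij : idx n r) : R :=
  if (ij.2.+1%:Z < mu ij.1) then 1 else if (ij.2.+1%:Z == mu ij.1) then pp ij.1 else 0.

Lemma mu_bounds i : 0 <= x i <= 1 -> (0 <= mu i)%R /\ (mu i <= r%:Z)%R.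
Proof.
move=> /andP[x0 x1]; rewrite /mu /enc_mu; split.
  rewrite ceil_ge0; have : 0 <= x i * r%:R by rewrite mulr_ge0.
  lra.
rewrite ceil_le_int /=.
have h : x i * r%:R <= 1 * r%:R by rewrite ler_wpM2r.
by rewrite mul1r in h.
Qed.

Lemma sum_mval i : 0 <= x i <= 1 -> \sum_(j < r) mval (i, j) = x i * r%:R.
Proof.
move=> hx; have [m0 mr] := mu_bounds i hx.
have [k hk] : exists k : nat, mu i = k%:Z.
  by exists `|mu i|%N; rewrite gez0_abs.
rewrite /mval /= hk.
under eq_bigr => j _ do rewrite ltz_nat eqz_nat.
rewrite sum_step.
have hc := ceil_itv (x i * r%:R).
rewrite -/(enc_mu r (x i)) -/(mu i) hk in hc.
case/andP: hx => x0 x1.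
have xr0 : 0 <= x i * r%:R by rewrite mulr_ge0.
case: k hk hc => [|k] hk hc /=.
  move: hc; rewrite /= => /andP[_ h]; lra.
have -> : (k < r)%N.
  by move: mr; rewrite hk lez_nat.
rewrite /pp /enc_p -/(enc_mu r (x i)) -/(mu i) hk.
have -> : (Posz k.+1)%:~R = (k.+1)%:R :> R by [].
rewrite -natr1; ring.
Qed.



Definition lr : R := lam / n%:R.
Definition qq : R := lr / 2.
Definition cc : R := 1 - lr.
Definition ymsg (ij : idx n r) (u : bool * bool * bool) : bool :=
  let: (e, bb, c) := u in if bb then c else bitf ij e.
Definition Ug (ij : idx n r) (u : bool * bool * bool) : R :=
  let: (e, bb, c) := u in cc * ((bitf ij e : nat)%:R - mval ij).
Definition Wg (ij : idx n r) (u : bool * bool * bool) : R :=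
  let: (e, bb, c) := u in (ymsg ij u : nat)%:R - cc * (bitf ij e : nat)%:R - qq.

Lemma message_eq (w : coins n r) ij : message x w ij = ymsg ij (w ij).
Proof. by rewrite /message /ymsg; case: (w ij) => [[e bb] c]. Qed.

Lemma sum_idx (F : idx n r -> R) : \sum_ij F ij = \sum_i \sum_j F (i, j).
Proof. by rewrite pair_big /=; apply: eq_bigr => -[i j]. Qed.

Lemma decomp (w : coins n r) : (forall i, 0 <= x i <= 1) -> (0 < n)%N -> (0 < r)%N ->
  lam < n%:R ->
  outc R n r lam x w - \sum_i x i =
  (\sum_ij Ug ij (w ij) + \sum_ij Wg ij (w ij)) / (r%:R * cc).
Proof.
move=> hx n0 r0 ln.
have -> : \sum_ij Ug ij (w ij) + \sum_ij Wg ij (w ij) =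
    \sum_ij ((ymsg ij (w ij) : nat)%:R - cc * mval ij - qq).
  rewrite -big_split; apply: eq_bigr => ij _ /=.
  by rewrite /Ug /Wg; case: (w ij) => [[e bb] c] /=; ring.
rewrite !big_split /= !sumrN -mulr_sumr sumr_const card_prod !card_ord.
rewrite (sum_idx mval).
under [X in _ = (_ - cc * X - _) / _]eq_bigr => i _ do rewrite sum_mval //.
rewrite /outc.
rewrite (eq_bigr (fun k => (ymsg k (w k) : nat)%:R)); last by move=> k _; rewrite message_eq.
rewrite -mulr_suml.
rewrite -[qq *+ _]mulr_natr natrM /cc /qq /lr.
have nn : n%:R != 0 :> R by rewrite pnatr_eq0 -lt0n.
have rn : r%:R != 0 :> R by rewrite pnatr_eq0 -lt0n.
have nl : n%:R - lam != 0 by apply/eqP => h; lra.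
by field; rewrite nn nl rn.
Qed.

Lemma sum_pair (A B : finType) (G : A * B -> R) : \sum_p G p = \sum_a \sum_b G (a, b).
Proof. by rewrite pair_big; apply: eq_bigr => -[a b]. Qed.

Lemma sum_triple (F : bool * bool * bool -> R) :
  \sum_u F u = \sum_e \sum_bb \sum_c F (e, bb, c).
Proof. by rewrite sum_pair -(@sum_pair _ _ (fun eb : bool * bool => \sum_c F (eb, c))). Qed.

Definition Aw (ij : idx n r) (e : bool) : R :=
  if (ij.2.+1%:Z == mu ij.1) then ber (pp ij.1) e else ber (1/2) e.

Lemma pp_bounds i : 0 <= pp i <= 1.
Proof.
rewrite /pp /enc_p; have := ceil_itv (x i * r%:R).
rewrite -/(enc_mu r (x i)) => /andP[h1 h2].
rewrite intrD /= in h1.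
by apply/andP; split; lra.
Qed.

Lemma Aw_ge0 ij e : 0 <= Aw ij e.
Proof.
have := pp_bounds ij.1; move=> /andP[p0 p1].
by rewrite /Aw; case: ifP; case: e; rewrite /ber /=; lra.
Qed.

Lemma Aw_sum ij : Aw ij true + Aw ij false = 1.
Proof. by rewrite /Aw; case: ifP; rewrite /ber; lra. Qed.

Lemma cw_eq ij e bb c :
  coin_weight lam x ij (e, bb, c) = Aw ij e * ber lr bb * ber (1/2) c.
Proof. by []. Qed.

Lemma W_factor ij z : 0 <= lr <= 1 ->
  \sum_u coin_weight lam x ij u * expR (z * Wg ij u) <= expR (qq * Mphi z).
Proof.
move=> hl.
rewrite sum_triple.
rewrite (_ : \sum_e _ = \sum_e Aw ij e * Hs lr z (bitf ij e)); last first.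
  apply: eq_bigr => e _; rewrite /Hs mulr_sumr; apply: eq_bigr => bb _.
  rewrite mulr_sumr; apply: eq_bigr => c _.
  by rewrite cw_eq !mulrA.
rewrite !big_bool /=.
have h1 := @Hs_bound R lr z (bitf ij true) hl.
have h2 := @Hs_bound R lr z (bitf ij false) hl.
have a1 := Aw_ge0 ij true; have a2 := Aw_ge0 ij false; have as1 := Aw_sum ij.
rewrite /qq.
nra.
Qed.

Lemma U_factor ij z :
  \sum_u coin_weight lam x ij u * expR (z * Ug ij u)
  <= expR (if (ij.2.+1%:Z == mu ij.1) then Mphi (z * cc) / 2 else 0).
Proof.
rewrite sum_triple.
rewrite (_ : \sum_e _ = \sum_e Aw ij e * expR (z * (cc * ((bitf ij e : nat)%:R - mval ij)))); last first.
  apply: eq_bigr => e _.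
  rewrite !big_bool /= /coin_weight /Aw /pp /mu /lr /Ug /ber /=.
  set A := (if _ then _ else _); set X := expR _; set L := lam / n%:R.
  by clearbody A X L; field.
rewrite !big_bool /= /Aw /bitf /enc_bit /mval /mu.
set k := (ij.2.+1)%:Z; set m := enc_mu r (x ij.1).
have hp := pp_bounds ij.1.
case: (ltgtP k m) => h /=.
- by rewrite subrr !mulr0 expR0 /ber; lra.
- by rewrite subrr !mulr0 expR0 /ber; lra.
- rewrite !mulrA.
  exact: Gs_bound.
Qed.

Lemma cw_ge0 (ij : idx n r) u : 0 <= lr <= 1 -> 0 <= coin_weight lam x ij u.
Proof.
move=> /andP[l0 l1]; case: u => [[e bb] c]; rewrite cw_eq.
have := Aw_ge0 ij e.
by case: bb; case: c; rewrite /ber /=; nra.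
Qed.

Lemma sum_one_le (k : int) (v : R) : 0 <= v ->
  \sum_(j < r) (if (j.+1%:Z == k) then v else 0) <= v.
Proof.
move=> v0.
case: (pickP (fun j : 'I_r => j.+1%:Z == k)) => [j0 hj0|none].
  rewrite (bigD1 j0) //= hj0 big1 ?addr0 // => j hj.
  case: eqP => // hk; exfalso; move/negP: hj; apply.
  apply/eqP/val_inj => /=; move/eqP: hj0 => hj0.
  by move: hk; rewrite -hj0 => /eqP; rewrite eqz_nat => /eqP [].
by rewrite big1 // => j _; rewrite none.
Qed.

Lemma boundU (sg s a : R) : (sg = 1 \/ sg = -1) -> 0 <= s -> 0 <= lr <= 1 ->
  \sum_(w : coins n r) (if a <= \sum_ij sg * Ug ij (w ij)
                        then \prod_(ij : idx n r) coin_weight lam x ij (w ij) else 0)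
  <= expR (- (s * a) + n%:R * (Mphi (s * cc) / 2)).
Proof.
move=> hsg s0 hl.
have H := @chernoff R (idx n r) _ (coin_weight lam x) (fun ij u => sg * Ug ij u) s a
  (fun ij u => cw_ge0 ij u hl) s0.
apply: (le_trans H).
have M0 := Mphi_ge0 (s * cc).
have step : \prod_(ij : idx n r) (\sum_u coin_weight lam x ij u * expR (s * (sg * Ug ij u)))
   <= \prod_(ij : idx n r) expR (if (ij.2.+1%:Z == mu ij.1) then Mphi (s * cc) / 2 else 0).
  apply: ler_prod => ij _; apply/andP; split.
    by apply: sumr_ge0 => u _; rewrite mulr_ge0 ?expR_ge0 ?cw_ge0.
  under eq_bigr => u _ do rewrite mulrA.
  have := U_factor ij (s * sg).
  have -> : Mphi (s * sg * cc) = Mphi (s * cc).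
    by case: hsg => ->; rewrite ?mulr1 // mulrN1 mulNr MphiN.
  done.
rewrite expRD; apply: ler_wpM2l; first exact: expR_ge0.
apply: (le_trans step).
rewrite -expR_sum ler_expR sum_idx.
rewrite /=.
apply: (@le_trans _ _ (\sum_(i < n) Mphi (s * cc) / 2)).
  apply: ler_sum => i _; apply: sum_one_le.
  by apply: divr_ge0.
by rewrite sumr_const card_ord mulr_natl.
Qed.

Lemma boundW (sg s b : R) : (sg = 1 \/ sg = -1) -> 0 <= s -> 0 <= lr <= 1 ->
  \sum_(w : coins n r) (if b <= \sum_ij sg * Wg ij (w ij)
                        then \prod_(ij : idx n r) coin_weight lam x ij (w ij) else 0)
  <= expR (- (s * b) + (n * r)%:R * (qq * Mphi s)).
Proof.
move=> hsg s0 hl.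
have H := @chernoff R (idx n r) _ (coin_weight lam x) (fun ij u => sg * Wg ij u) s b
  (fun ij u => cw_ge0 ij u hl) s0.
apply: (le_trans H).
rewrite expRD; apply: ler_wpM2l; first exact: expR_ge0.
have -> : (n * r)%N = #|idx n r| by rewrite card_prod !card_ord.
rewrite mulr_natl -sumr_const expR_sum.
apply: ler_prod => ij _; apply/andP; split.
  by apply: sumr_ge0 => u _; rewrite mulr_ge0 ?expR_ge0 ?cw_ge0.
under eq_bigr => u _ do rewrite mulrA.
have := W_factor ij (s * sg) hl.
have -> : Mphi (s * sg) = Mphi s.
  by case: hsg => ->; rewrite ?mulr1 // mulrN1 MphiN.
done.
Qed.

Lemma total_le1 : 0 <= lr <= 1 ->
  \sum_(w : coins n r) \prod_(ij : idx n r) coin_weight lam x ij (w ij) <= 1.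
Proof.
move=> hl.
rewrite -bigA_distr_bigA.
apply: (@le_trans _ _ (\prod_(ij : idx n r) (1 : R))); last by rewrite big1.
apply: ler_prod => ij _; apply/andP; split.
  by apply: sumr_ge0 => u _; rewrite cw_ge0.
have := W_factor ij 0 hl.
have -> : Mphi 0 = 0 :> R.
  by apply/eqP; rewrite eq_le Mphi_ge0 andbT; have := @Mphi_le R 0; rewrite normr0 expr0n /=; apply; lra.
rewrite mulr0 expR0.
move=> h; apply: (le_trans _ h).
by apply: ler_sum => u _; rewrite mul0r expR0 mulr1.

Qed.


End Model.

Lemma ind_split (R : realType) (P A1 A2 B1 B2 K T1 T2 D : R) : 0 <= P -> 0 < K ->
  D = (A1 + B1) / K -> A2 = - A1 -> B2 = - B1 ->
  (if T1 + T2 <= `|D| then P else 0) <=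
  (if T1 * K <= A1 then P else 0) + (if T1 * K <= A2 then P else 0) +
  ((if T2 * K <= B1 then P else 0) + (if T2 * K <= B2 then P else 0)).
Proof.
move=> P0 K0 -> -> ->.
case: ifP => h; last first.
  by do 4! case: ifP => _; lra.
have h2 : (T1 + T2) * K <= `|A1 + B1|.
  by move: h; rewrite normf_div (gtr0_norm K0) ler_pdivlMr.
case: (lerP (T1 * K) A1) => h3; case: (lerP (T1 * K) (- A1)) => h4;
case: (lerP (T2 * K) B1) => h5; case: (lerP (T2 * K) (- B1)) => h6; try lra.
exfalso; move: h2; case: (lerP 0 (A1 + B1)) => s.
  rewrite ger0_norm //; lra.
rewrite ltr0_norm //; lra.
Qed.

Theorem theorem5p5 (R : realType) (n r : nat) (beta lam : R) (x : 'I_n -> R) :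
  0 < beta ->
  0 < lam -> lam < n%:R ->
  16 / 9 * ln (2 / beta) <= lam ->
  (0 < r)%N ->
  (forall i, 0 <= x i <= 1) ->
  prob r lam x
    (fun out => Num.sqrt 2 / r%:R * Num.sqrt (n%:R * ln (2 / beta))
                + n%:R / (n%:R - lam) * Num.sqrt (2 * (lam / r%:R) * ln (2 / beta))
                <= `|out - \sum_(i < n) x i|)
  < 2 * beta.
Proof.
move=> hb hl0 hln hL hr hx.
have nR0 : 0 < n%:R :> R by lra.
have n0 : (0 < n)%N by rewrite -(ltr0n R).
have rR0 : 0 < r%:R :> R by rewrite ltr0n.
have rR1 : 1 <= r%:R :> R by rewrite ler1n.
have hlr : 0 <= lr R n lam <= 1.
  rewrite /lr; apply/andP; split; first by rewrite divr_ge0 // ltW.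
  by rewrite ler_pdivrMr // mul1r ltW.
rewrite prob_marg.
set L := ln (2 / beta) in hL *.
case: (lerP (2 / beta) 1) => hbeta.
  have b2 : 2 <= beta by move: hbeta; rewrite ler_pdivrMr // mul1r.
  apply: (le_lt_trans _ (_ : 1 < 2 * beta)); last by lra.
  apply: (le_trans _ (total_le1 R n r lam x hlr)).
  apply: ler_sum => w _; case: ifP => _ //.
  by apply: prodr_ge0 => ij _; exact: (cw_ge0 R n r lam x ij _ hlr).
have L0 : 0 < L by apply: ln_gt0.
set c := cc R n lam.
have c0 : 0 < c by rewrite /c /cc /lr subr_gt0 ltr_pdivrMr // mul1r.
set K := r%:R * c.
have K0 : 0 < K by rewrite mulr_gt0.
set T1 := Num.sqrt 2 / r%:R * Num.sqrt (n%:R * L).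
set Bq := Num.sqrt (2 * (lam / r%:R) * L).
set T2 := n%:R / (n%:R - lam) * Bq.
set a := T1 * K. set b := T2 * K.
set P := fun w : coins n r => \prod_(ij : idx n r) coin_weight lam x ij (w ij).
have step1 : \sum_(w : coins n r) (if T1 + T2 <= `|outc R n r lam x w - \sum_(i < n) x i| then P w else 0)
  <= \sum_(w : coins n r) (if a <= \sum_ij 1 * Ug R n r lam x ij (w ij) then P w else 0)
   + \sum_(w : coins n r) (if a <= \sum_ij (-1) * Ug R n r lam x ij (w ij) then P w else 0)
   + (\sum_(w : coins n r) (if b <= \sum_ij 1 * Wg R n r lam x ij (w ij) then P w else 0)
   + \sum_(w : coins n r) (if b <= \sum_ij (-1) * Wg R n r lam x ij (w ij) then P w else 0)).
  rewrite -!big_split /=; apply: ler_sum => w _.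
  apply: ind_split.
  - by apply: prodr_ge0 => ij _; exact: (cw_ge0 R n r lam x ij _ hlr).
  - exact: K0.
  - rewrite (decomp R n r lam x w hx n0 hr hln) /K /c.
    by congr ((_ + _) / _); apply: eq_bigr => ij _; rewrite mul1r.
  - by rewrite -sumrN; apply: eq_bigr => ij _; rewrite mulN1r mul1r.
  - by rewrite -sumrN; apply: eq_bigr => ij _; rewrite mulN1r mul1r.
apply: (le_lt_trans step1).
have s2 : Num.sqrt 2 ^+ 2 = 2 :> R by rewrite sqr_sqrtr.
have s3 : Num.sqrt (n%:R * L) ^+ 2 = n%:R * L by rewrite sqr_sqrtr // mulr_ge0 // ltW.
have sB : Bq ^+ 2 = 2 * (lam / r%:R) * L.
  by rewrite sqr_sqrtr // !mulr_ge0 // ?divr_ge0 // ltW.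
have g2 : 0 <= Num.sqrt 2 :> R by apply: sqrtr_ge0.
have g3 : 0 <= Num.sqrt (n%:R * L) by apply: sqrtr_ge0.
have gB : 0 <= Bq by apply: sqrtr_ge0.
have nl0 : n%:R - lam != 0 by apply/eqP => h; lra.
have cE : c = (n%:R - lam) / n%:R.
  by rewrite /c /cc /lr; field; rewrite gt_eqF.
have Lsmall : L <= 9 / 16 * lam by lra.
set z0 := Num.sqrt 2 * Num.sqrt (n%:R * L) / n%:R.
have z0sq : z0 ^+ 2 = 2 * L / n%:R.
  rewrite /z0 (_ : _ ^+ 2 = Num.sqrt 2 ^+ 2 * Num.sqrt (n%:R * L) ^+ 2 / n%:R ^+ 2); last first.
    by field; rewrite gt_eqF.
  by rewrite s2 s3; field; rewrite gt_eqF.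
have z0ge : 0 <= z0 by rewrite /z0 divr_ge0 // mulr_ge0.
have z0ne : z0 != 0.
  apply/eqP => h; move: z0sq; rewrite h expr0n /= => h2.
  have : 0 < 2 * L / n%:R by rewrite divr_gt0 // mulr_gt0.
  lra.
have z0b : `|z0| <= 11 / 10.
  rewrite ger0_norm //.
  have h1 : 2 * L / n%:R <= 9 / 8.
    rewrite ler_pdivrMr //; lra.
  rewrite -z0sq in h1.
  nra.
set sU := z0 / c.
have sU0 : 0 <= sU by rewrite divr_ge0 // ltW.
have sUc : sU * c = z0 by rewrite /sU divfK // gt_eqF.
have sUa : sU * a = 2 * L.
  rewrite /sU /a /T1 /K /z0.
  rewrite (_ : _ * _ = Num.sqrt 2 ^+ 2 * Num.sqrt (n%:R * L) ^+ 2 / n%:R); last first.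
    by field; rewrite !gt_eqF.
  by rewrite s2 s3; field; rewrite gt_eqF.
have bU : - (sU * a) + n%:R * (Mphi (sU * c) / 2) < - L.
  rewrite sUc sUa.
  have := Mphi_lt z0 z0ne z0b; rewrite z0sq => hM.
  have : n%:R * (Mphi z0 / 2) < n%:R * (2 * L / n%:R / 2).
    by rewrite ltr_pM2l // ltr_pM2r.
  rewrite (_ : n%:R * (2 * L / n%:R / 2) = L); last by field; rewrite gt_eqF.
  lra.
have U1 := boundU R n r lam x 1 sU a (or_introl erefl) sU0 hlr.
have U2 := boundU R n r lam x (-1) sU a (or_intror erefl) sU0 hlr.
set sW := Bq / lam.
have sW0 : 0 <= sW by rewrite divr_ge0 // ltW.
have sWsq : sW ^+ 2 = 2 * L / (r%:R * lam).
  rewrite /sW expr_div_n sB; field; rewrite !gt_eqF //.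
have sWb : `|sW| <= 11 / 10.
  rewrite ger0_norm //.
  have h1 : 2 * L / (r%:R * lam) <= 9 / 8.
    rewrite ler_pdivrMr ?mulr_gt0 //.
    have : lam <= r%:R * lam by rewrite ler_peMl // ltW.
    lra.
  rewrite -sWsq in h1.
  nra.
have sWb2 : sW * b = 2 * L.
  rewrite /sW /b /T2 /K cE.
  rewrite (_ : _ * _ = Bq ^+ 2 * r%:R / lam); last first.
    by field; rewrite nl0 !gt_eqF.
  by rewrite sB; field; rewrite !gt_eqF.
have bW : - (sW * b) + (n * r)%:R * (qq R n lam * Mphi sW) <= - L.
  rewrite sWb2.
  have hM := Mphi_le sW sWb; rewrite sWsq in hM.
  have q0 : 0 <= qq R n lam by rewrite /qq /lr !divr_ge0 // ltW.
  have : (n * r)%:R * (qq R n lam * Mphi sW) <= (n * r)%:R * (qq R n lam * (2 * L / (r%:R * lam))).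
    by rewrite ler_wpM2l // ler_wpM2l.
  rewrite (_ : (n * r)%:R * (qq R n lam * (2 * L / (r%:R * lam))) = L); last first.
    by rewrite /qq /lr natrM; field; rewrite !gt_eqF.
  lra.
have W1 := boundW R n r lam x 1 sW b (or_introl erefl) sW0 hlr.
have W2 := boundW R n r lam x (-1) sW b (or_intror erefl) sW0 hlr.
have eL : expR (- L) = beta / 2.
  rewrite expRN lnK ?invf_div // posrE divr_gt0 //.
have eU : expR (- (sU * a) + n%:R * (Mphi (sU * c) / 2)) < beta / 2.
  by rewrite -eL ltr_expR.
have eW : expR (- (sW * b) + (n * r)%:R * (qq R n lam * Mphi sW)) <= beta / 2.
  by rewrite -eL ler_expR.
rewrite /P /c in U1 U2 W1 W2 eU eW *.
lra.
Qed.
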